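(* Let $G$ and $H$ be isomorphic graphs on $n\ge 3$ vertices and let $1\le k\le n-1$. The following are equivalent: 1) $F_k(G)$ is uniquely reconstructible as the $k$-token graph of $G$. 2) $\operatorname{Aut}(F_k(G))\simeq\operatorname{Aut}(G)\times\mathbb{Z}_2$ if $k=n/2$, and $\operatorname{Aut}(F_k(G))\simeq\operatorname{Aut}(G)$ otherwise. 3) For every $\psi\in\operatorname{Iso}(F_k(H),F_k(G))$ there exists $f(\psi)\in\operatorname{Iso}(H,G)$ such that $\psi=\iota(f(\psi))$ or $\psi=\mathfrak{c}\circ\iota(f(\psi))$. 4) There exists a function $f$ assigning to every $\psi\in\operatorname{Iso}(F_k(H),F_k(G))$ a function $f(\psi):V(H)\to V(G)$ such that for every vertex $u$ of $H$, either $\psi(\kappa_H(u,k))=\kappa_G(f(\psi)(u),k)$ or $\psi(\kappa_H(u,k))=\overline{\kappa_G}(f(\psi)(u),k)$.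
   Context: $F_k(G)$ is the graph on the $k$-subsets of $V(G)$ in which $A,B$ are adjacent iff $A\triangle B$ is an edge of $G$. $\operatorname{Iso}(X,Y)$ denotes the set of graph isomorphisms $X\to Y$ and $\operatorname{Aut}(X)$ the automorphism group. For $\psi\in\operatorname{Iso}(H,G)$, $\iota(\psi):V(F_k(H))\to V(F_k(G))$ is $\iota(\psi)(A)=\{\psi(v):v\in A\}$. $\mathfrak{c}$ sends each $k$-subset $A$ of $V(G)$ to $V(G)\setminus A$ (an isomorphism $F_k(G)\to F_{n-k}(G)$). For a vertex $u$ of $G$, $\kappa_G(u,k)=\{A\in V(F_k(G)):u\in A\}$ and $\overline{\kappa_G}(u,k)=\{A\in V(F_k(G)):u\notin A\}$ (similarly for $H$). A $k$-token reconstruction of a graph $F$ is a pair $(G',\varphi)$ with $\varphi$ an isomorphism $F\to F_k(G')$. Two $k$-token reconstructions $(G,\varphi),(G,\psi)$ of $F$ are equivalent if there is $s\in\operatorname{Aut}(G)$ with $\psi=\iota(s)\circ\varphi$ or $\psi=\mathfrak{c}\circ\iota(s)\circ\varphi$. $F$ is uniquely reconstructible as the $k$-token graph of $G$ if any two $k$-token reconstructions of $F$ of the form $(G,\cdot)$ are equivalent. *)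

(* Defs.v *)
From HB Require Import structures.
From mathcomp Require Import all_boot all_fingroup.
From mathcomp Require Import gproduct zmodp.

Set Implicit Arguments.
Unset Strict Implicit.
Unset Printing Implicit Defensive.

Definition simple_graph (V : finType) (e : rel V) : Prop :=
  symmetric e /\ irreflexive e.

Definition is_iso (X Y : finType) (eX : rel X) (eY : rel Y) (f : X -> Y) : Prop :=
  bijective f /\ forall x y, eY (f x) (f y) = eX x y.

Definition ksub (V : finType) (k : nat) := {A : {set V} | #|A| == k}.

(* Adjacency of F_k(G): A ~ B iff A (symmetric difference) B is an edge of G. *)
Definition tok (V : finType) (e : rel V) (k : nat) : rel (ksub V k) :=
  fun A B => [exists u, exists v,
     e u v && (((val A :\: val B) :|: (val B :\: val A)) == [set u; v])].

Arguments tok {V} e k.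

Definition iota_set (W V : finType) (f : W -> V) (A : {set W}) : {set V} := f @: A.

Definition compl_set (V : finType) (A : {set V}) : {set V} := ~: A.

Definition kappa (V : finType) (u : V) (k : nat) : {set ksub V k} :=
  [set A : ksub V k | u \in val A].
Definition kappabar (V : finType) (u : V) (k : nat) : {set ksub V k} :=
  [set A : ksub V k | u \notin val A].

Arguments kappa {V} u k.
Arguments kappabar {V} u k.

Definition recon_equiv (T V : finType) (e : rel V) (k : nat)
    (phi psi : T -> ksub V k) : Prop :=
  exists s : V -> V, is_iso e e s /\
    ((forall x, val (psi x) = iota_set s (val (phi x))) \/
     (forall x, val (psi x) = compl_set (iota_set s (val (phi x))))).

Arguments recon_equiv {T V} e {k} phi psi.

Definition uniquely_reconstructible (T V : finType) (eF : rel T) (e : rel V)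
    (k : nat) : Prop :=
  forall phi psi : T -> ksub V k,
    is_iso eF (tok e k) phi -> is_iso eF (tok e k) psi ->
    recon_equiv e phi psi.

Arguments uniquely_reconstructible {T V} eF e k.

Definition GAut (X : finType) (eX : rel X) : {set {perm X}} :=
  [set s : {perm X} | [forall x, forall y, eX (s x) (s y) == eX x y]].

(* Main.v *)
Require Import Defs.
From HB Require Import structures.
From mathcomp Require Import all_boot all_fingroup.
From mathcomp Require Import gproduct zmodp.
From mathcomp Require Import zify.
Set Implicit Arguments.
Unset Strict Implicit.
Unset Printing Implicit Defensive.


Lemma exists_subset (T : finType) (A : {set T}) m :
  m <= #|A| -> exists2 B : {set T}, B \subset A & #|B| = m.
Proof.
move=> hm; exists [set x in take m (enum A)].
  by apply/subsetP=> x; rewrite inE => /mem_take; rewrite mem_enum.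
rewrite cardsE; have /card_uniqP -> : uniq (take m (enum A)).
  by rewrite take_uniq // enum_uniq.
by rewrite size_takel // -cardE.
Qed.

Lemma exists_kset (T : finType) (I E : {set T}) m :
  I \subset ~: E -> #|I| <= m -> m + #|E| <= #|T| ->
  exists A : {set T}, [/\ I \subset A, A \subset ~: E & #|A| = m].
Proof.
move=> dIE hI hE.
have IE0 : I :&: E = set0.
  apply/setP=> x; rewrite !inE; apply/negP=> /andP[xI xE].
  by move/subsetP: dIE => /(_ x xI); rewrite !inE xE.
have cU : #|I :|: E| = #|I| + #|E|.
  by rewrite cardsU IE0 cards0 subn0.
have cC : #|~: (I :|: E)| = #|T| - (#|I| + #|E|).
  by rewrite -cU -(cardsC (I :|: E)) addKn.
have [B sB cB] := @exists_subset _ (~: (I :|: E)) (m - #|I|) ltac:(rewrite cC; lia).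
exists (I :|: B); split.
- exact: subsetUl.
- apply/subsetP => x; rewrite inE => /orP[xI|xB].
    by move/subsetP: dIE => /(_ x xI).
  by move/subsetP: sB => /(_ x xB); rewrite !inE negb_or => /andP[].
- rewrite cardsU cB.
  have -> : I :&: B = set0.
    apply/setP=> x; rewrite !inE; apply/negP=> /andP[xI xB].
    by move/subsetP: sB => /(_ x xB); rewrite !inE xI.
  rewrite cards0 subn0; lia.
Qed.


Definition sd (T : finType) (P Q : {set T}) := (P :\: Q) :|: (Q :\: P).

Lemma tokE (T : finType) (r : rel T) k (A B : ksub T k) :
  tok r k A B = [exists u, exists v, r u v && (sd (val A) (val B) == [set u; v])].
Proof. by []. Qed.

Lemma sd_imset (X Y : finType) (f : X -> Y) (P Q : {set X}) :
  bijective f -> sd (f @: P) (f @: Q) = f @: sd P Q.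
Proof.
move=> fb; have fi := bij_inj fb; have [g fg gf] := fb.
apply/setP => y; rewrite -[y](gf y) mem_imset // !inE.
by rewrite !mem_imset.
Qed.

Lemma imsetC_bij (X Y : finType) (f : X -> Y) (P : {set X}) :
  bijective f -> f @: (~: P) = ~: (f @: P).
Proof.
move=> fb; have fi := bij_inj fb; have [g fg gf] := fb.
by apply/setP => y; rewrite -[y](gf y) !inE !mem_imset // !inE.
Qed.

Lemma sd_compl (T : finType) (P Q : {set T}) : sd (~: P) (~: Q) = sd P Q.
Proof.
apply/setP => x; rewrite !inE.
by case: (x \in P); case: (x \in Q).
Qed.

Lemma exists_transfer (X Y : finType) (r : rel X) (r' : rel Y) (f : X -> Y)
  (D : {set X}) : bijective f -> (forall x y, r' (f x) (f y) = r x y) ->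
  [exists u, exists v, r' u v && (f @: D == [set u; v])] =
  [exists u, exists v, r u v && (D == [set u; v])].
Proof.
move=> fb fr; have fi := bij_inj fb; have [g fg gf] := fb.
apply/existsP/existsP.
  case=> u /existsP [v /andP [ruv /eqP E]]; exists (g u); apply/existsP.
  exists (g v); rewrite -fr !gf ruv /=; apply/eqP; apply: (imset_inj fi).
  by rewrite E imsetU1 imset_set1 !gf.
case=> u /existsP [v /andP [ruv /eqP E]]; exists (f u); apply/existsP.
exists (f v); rewrite fr ruv /= E.
by rewrite imsetU1 imset_set1.
Qed.

Lemma tok_iso (X Y : finType) (r : rel X) (r' : rel Y) (f : X -> Y) k
  (A B : ksub X k) (A' B' : ksub Y k) :
  bijective f -> (forall x y, r' (f x) (f y) = r x y) ->
  (val A' = f @: val A /\ val B' = f @: val B) \/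
  (val A' = ~: (f @: val A) /\ val B' = ~: (f @: val B)) ->
  tok r' k A' B' = tok r k A B.
Proof.
move=> fb fr H; rewrite !tokE.
case: H => [[-> ->]|[-> ->]]; rewrite ?sd_compl sd_imset //;
  exact: exists_transfer.
Qed.

Lemma tok_pair (T : finType) (r : rel T) k (A B : ksub T k) a b :
  symmetric r -> a != b -> sd (val A) (val B) = [set a; b] ->
  tok r k A B = r a b.
Proof.
move=> rs ab E; rewrite tokE E; apply/existsP/idP.
  case=> u /existsP [v /andP [ruv /eqP E2]].
  have : a \in [set u; v] by rewrite -E2 set21.
  have : b \in [set u; v] by rewrite -E2 set22.
  rewrite !inE => /orP[/eqP bu|/eqP bv] /orP[/eqP au|/eqP av]; subst.
  - by rewrite eqxx in ab.
  - by rewrite rs.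
  - by [].
  - by rewrite eqxx in ab.
by move=> rab; exists a; apply/existsP; exists b; rewrite rab eqxx.
Qed.


Lemma mk_ksub (T : finType) k (A : {set T}) : #|A| = k -> exists X : ksub T k, val X = A.
Proof. by move=> cA; exists (exist _ A (introT eqP cA)). Qed.

Lemma sd_swap (T : finType) (T0 : {set T}) u u' :
  u \notin T0 -> u' \notin T0 -> u != u' ->
  sd (u |: T0) (u' |: T0) = [set u; u'].
Proof.
move=> uT u'T uu'; apply/setP => x; rewrite !inE.
have [->|xu] := eqVneq x u; first by rewrite (negbTE uT) (negbTE uu') /=.
have [->|xu'] := eqVneq x u'.
  by rewrite (negbTE u'T) /=.
by rewrite /=; case: (x \in T0).
Qed.

Section KSets.
Variables (T : finType) (n k : nat).
Hypothesis cT : #|T| = n.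
Hypothesis hk : 1 <= k <= n - 1.

Lemma card2le (u u' : T) : #|[set u; u']| <= 2.
Proof. by rewrite cards2; case: (u != u'). Qed.

Lemma kset_sep u u' : u != u' ->
  exists T0 : {set T}, [/\ u \notin T0, u' \notin T0 & #|T0| = k.-1].
Proof.
move=> uu'.
have [A [_ sA cA]] := @exists_kset T set0 [set u; u'] k.-1 (sub0set _)
  ltac:(by rewrite cards0) ltac:(have := card2le u u'; lia).
exists A; split => //.
  by apply/negP => /(subsetP sA); rewrite !inE eqxx.
by apply/negP => /(subsetP sA); rewrite !inE eqxx orbT.
Qed.

Lemma kset_in_out u u' : u != u' ->
  exists X : ksub T k, u \in val X /\ u' \notin val X.
Proof.
move=> uu'; have [T0 [uT u'T cT0]] := kset_sep uu'.
have [X vX] := @mk_ksub T k (u |: T0) ltac:(rewrite cardsU1 uT cT0; lia).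
by exists X; rewrite vX !inE eqxx eq_sym (negbTE uu') /=.
Qed.

Lemma kset_both u u' : 2 <= k ->
  exists X : ksub T k, u \in val X /\ u' \in val X.
Proof.
move=> k2.
have [A [sA _ cA]] := @exists_kset T [set u; u'] set0 k
  ltac:(by apply/subsetP => x; rewrite !inE)
  ltac:(have := card2le u u'; lia) ltac:(rewrite cards0; lia).
have [X vX] := mk_ksub cA.
by exists X; rewrite vX; split; apply: (subsetP sA); rewrite !inE eqxx ?orbT.
Qed.

Lemma kset_none u u' : k + 2 <= n ->
  exists X : ksub T k, u \notin val X /\ u' \notin val X.
Proof.
move=> k2.
have [A [_ sA cA]] := @exists_kset T set0 [set u; u'] k (sub0set _)
  ltac:(by rewrite cards0) ltac:(have := card2le u u'; lia).
have [X vX] := mk_ksub cA.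
exists X; rewrite vX; split; apply/negP => /(subsetP sA); rewrite !inE eqxx //.
by rewrite orbT.
Qed.

Lemma kset_any : exists X : ksub T k, True.
Proof.
have [A [_ _ cA]] := @exists_kset T set0 set0 k (sub0set _)
  ltac:(by rewrite cards0) ltac:(rewrite cards0; lia).
by have [X _] := mk_ksub cA; exists X.
Qed.

End KSets.


Definition Ind (X Y : finType) k (s : X -> Y) (chi : ksub X k -> ksub Y k) :=
  (forall A, val (chi A) = s @: val A) \/ (forall A, val (chi A) = ~: (s @: val A)).

Section FourThree.
Variables (V W : finType) (e : rel V) (h : rel W) (n k : nat).
Hypotheses (se : simple_graph e) (sh : simple_graph h).
Hypotheses (cV : #|V| = n) (cW : #|W| = n) (n3 : 3 <= n) (hk : 1 <= k <= n - 1).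
Variables (psi : ksub W k -> ksub V k) (f : W -> V).
Hypothesis psiI : is_iso (tok h k) (tok e k) psi.
Hypothesis fK : forall u, psi @: kappa u k = kappa (f u) k \/ psi @: kappa u k = kappabar (f u) k.

Let psii : injective psi := bij_inj psiI.1.

Let sgn u : bool := [forall A : ksub W k, (u \in val A) == (f u \in val (psi A))].

Let key u (A : ksub W k) : (u \in val A) = ((f u \in val (psi A)) == sgn u).
Proof.
have mem1 B (S : {set ksub W k}) (S' : {set ksub V k}) :
    psi @: S = S' -> (B \in S) = (psi B \in S').
  by move=> <-; rewrite mem_imset.
case: (fK u) => H.
  have Hs : sgn u.
    by apply/forallP => B; have := mem1 B _ _ H; rewrite !inE => ->.
  have E := mem1 A _ _ H; rewrite !inE in E; by rewrite E Hs eqb_id.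
have [B _] := kset_any cW hk.
have Hs : sgn u = false.
  apply/negbTE/negP => /forallP /(_ B); have E := mem1 B _ _ H; rewrite !inE in E; rewrite E.
  by case: (f u \in val (psi B)).
have E := mem1 A _ _ H; rewrite !inE in E; by rewrite E Hs eqbF_neg.
Qed.

Let keyf u (A : ksub W k) : (f u \in val (psi A)) = ((u \in val A) == sgn u).
Proof. by rewrite key; case: (f u \in val (psi A)); case: (sgn u). Qed.

Let finj : injective f.
Proof.
move=> u u' fuu'; apply/eqP; apply/negP => /negP uu'.
have [su|su] := eqVneq (sgn u) (sgn u').
  have [A [uA u'A]] := kset_in_out cW hk uu'.
  by move: uA; rewrite key fuu' su -key (negbTE u'A).
have [k2|k1] := leqP 2 k.
  have [A [uA u'A]] := kset_both cW hk u u' k2.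
  move: uA u'A su; rewrite !key fuu'.
  by case: (f u' \in val (psi A)); case: (sgn u); case: (sgn u').
have [A [uA u'A]] := kset_none cW hk u u' ltac:(lia).
move: uA u'A su; rewrite !key fuu'.
by case: (f u' \in val (psi A)); case: (sgn u); case: (sgn u').
Qed.

Let fbij : bijective f.
Proof. by apply: inj_card_bij finj _; rewrite cV cW. Qed.

Let sgn_eq u u' : sgn u = sgn u'.
Proof.
wlog : u u' / sgn u && ~~ sgn u'.
  move=> H; case Hu: (sgn u); case Hu': (sgn u') => //.
    by have := H u u'; rewrite Hu Hu' => /(_ isT).
  by have := H u' u; rewrite Hu Hu' => /(_ isT).
case/andP => Hu Hu'.
have uu' : u != u' by apply/eqP => E; rewrite -E Hu in Hu'.
have [T0 [uT u'T cT0]] := kset_sep cW hk uu'.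
have [A vA] := @mk_ksub W k (u' |: T0) ltac:(rewrite cardsU1 u'T cT0; lia).
have [A' vA'] := @mk_ksub W k (u |: T0) ltac:(rewrite cardsU1 uT cT0; lia).
have [finv ff fi] := fbij.
have E : val (psi A') = f u |: (f u' |: val (psi A)).
  apply/setP => y; rewrite -[y](fi y) !inE !keyf vA vA' !inE !(inj_eq finj).
  have [->|wu] := eqVneq (finv y) u; first by rewrite Hu.
  have [->|wu'] := eqVneq (finv y) u'; first by rewrite (negbTE u'T) ?orbT.
  by [].
have nu : f u \notin val (psi A).
  by rewrite keyf vA Hu !inE eq_sym (negbTE uu') (negbTE uT).
have nu' : f u' \notin val (psi A) by rewrite keyf vA (negbTE Hu') !inE eqxx.
have := valP (psi A'); rewrite E cardsU1 cardsU1 !inE negb_or nu nu'.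
rewrite (inj_eq finj) eq_sym uu' (eqP (valP (psi A))) /=.
move/eqP; lia.
Qed.

Let find : Ind f psi.
Proof.
have [finv ff fi] := fbij.
have [u0 _] : exists u : W, True.
  by have /card_gt0P[x _] : 0 < #|W| by rewrite cW; lia.
case Hs: (sgn u0); [left|right] => A; apply/setP => y;
  rewrite -[y](fi y) keyf ?inE mem_imset // (sgn_eq _ u0) Hs.
  by rewrite eqb_id.
by rewrite eqbF_neg.
Qed.

Lemma four_three_main : is_iso h e f /\ Ind f psi.
Proof.
split => //; split => // x y.
have [->|xy] := eqVneq x y; first by rewrite se.2 sh.2.
have [T0 [uT u'T cT0]] := kset_sep cW hk xy.
have [A vA] := @mk_ksub W k (x |: T0) ltac:(rewrite cardsU1 uT cT0; lia).
have [B vB] := @mk_ksub W k (y |: T0) ltac:(rewrite cardsU1 u'T cT0; lia).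
have sdAB : sd (val A) (val B) = [set x; y] by rewrite vA vB sd_swap.
have fxy : f x != f y by rewrite (inj_eq finj).
rewrite -(tok_pair sh.1 xy sdAB) -psiI.2 (tok_pair se.1 fxy) //.
case: find => H; rewrite !H ?sd_compl sd_imset // sdAB imsetU1 imset_set1 //.
Qed.

End FourThree.

Lemma four_three (V W : finType) (e : rel V) (h : rel W) (n k : nat) :
  simple_graph e -> simple_graph h -> #|V| = n -> #|W| = n -> 3 <= n ->
  1 <= k <= n - 1 -> forall psi f, is_iso (tok h k) (tok e k) psi ->
  (forall u, psi @: kappa u k = kappa (f u) k \/ psi @: kappa u k = kappabar (f u) k) ->
  is_iso h e f /\ Ind f psi.
Proof. by move=> *; apply: four_three_main; eauto. Qed.


Definition AI (V : finType) (e : rel V) k :=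
  forall psi : ksub V k -> ksub V k, is_iso (tok e k) (tok e k) psi ->
  exists s, is_iso e e s /\ Ind s psi.

Definition S3 (V W : finType) (e : rel V) (h : rel W) k :=
  forall psi : ksub W k -> ksub V k, is_iso (tok h k) (tok e k) psi ->
  exists fpsi, is_iso h e fpsi /\ Ind fpsi psi.

Lemma iso_comp (X Y Z : finType) (a : rel X) (b : rel Y) (c : rel Z) f g :
  is_iso a b f -> is_iso b c g -> is_iso a c (g \o f).
Proof.
move=> [fb fr] [gb gr]; split; first exact: bij_comp.
by move=> x y /=; rewrite gr fr.
Qed.

Lemma iso_inv (X Y : finType) (a : rel X) (b : rel Y) f :
  is_iso a b f -> exists f', [/\ is_iso b a f', cancel f f' & cancel f' f].
Proof.
move=> [[f' ff' f'f] fr]; exists f'; split => //; split.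
  by exists f.
by move=> x y; rewrite -fr !f'f.
Qed.

Lemma Ind_comp (X Y Z : finType) k (a : X -> Y) (b : Y -> Z) chi psi :
  Ind a chi -> Ind b psi -> bijective b -> Ind (b \o a) (fun A : ksub X k => psi (chi A)).
Proof.
move=> [Ha|Ha] [Hb|Hb] bb.
- by left => A; rewrite Hb Ha imset_comp.
- by right => A; rewrite Hb Ha imset_comp.
- by right => A; rewrite Hb Ha imsetC_bij // imset_comp.
- by left => A; rewrite Hb Ha imsetC_bij // setCK imset_comp.
Qed.

Lemma Ind_ext (X Y : finType) k (s : X -> Y) (psi psi' : ksub X k -> ksub Y k) :
  (forall A, psi A = psi' A) -> Ind s psi -> Ind s psi'.
Proof. by move=> E [H|H]; [left|right] => A; rewrite -E H. Qed.

Definition iotaK (X Y : finType) k (d : ksub Y k) (f : X -> Y) (A : ksub X k) : ksub Y k :=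
  insubd d (f @: val A).

Lemma val_iotaK (X Y : finType) k (d : ksub Y k) (f : X -> Y) A :
  injective f -> val (iotaK d f A) = f @: val A.
Proof. by move=> fi; rewrite val_insubd card_imset // (valP A). Qed.

Lemma iotaK_iso (X Y : finType) (r : rel X) (r' : rel Y) k (d : ksub Y k) (d' : ksub X k) f :
  is_iso r r' f -> is_iso (tok r k) (tok r' k) (iotaK d f).
Proof.
move=> fI; have [f' [f'I ff' f'f]] := iso_inv fI.
have fi := bij_inj fI.1; have f'i := bij_inj f'I.1.
split.
  exists (iotaK d' f') => A; apply: val_inj;
  rewrite !val_iotaK // -imset_comp (eq_imset _ (_ : _ =1 id)) ?imset_id //.
by move=> A B; apply: tok_iso fI.1 fI.2 _; left; rewrite !val_iotaK.
Qed.

Lemma Ind_iotaK (X Y : finType) k (d : ksub Y k) (f : X -> Y) :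
  injective f -> Ind f (iotaK d f).
Proof. by move=> fi; left => A; rewrite val_iotaK. Qed.

Section Transfer.
Variables (V W : finType) (e : rel V) (h : rel W) (k : nat) (g : W -> V).
Hypothesis gI : is_iso h e g.
Variables (dV : ksub V k) (dW : ksub W k).

Lemma AI_S3 : AI e k -> S3 e h k.
Proof.
move=> ai psi psiI.
have [g' [g'I gg' g'g]] := iso_inv gI.
have chiI := iso_comp (iotaK_iso dW dV g'I) psiI.
have [s [sI sInd]] := ai _ chiI.
exists (s \o g); split; first exact: iso_comp gI sI.
have := Ind_comp (Ind_iotaK dV (bij_inj gI.1)) sInd sI.1.
apply: Ind_ext => A /=; congr psi; apply: val_inj.
have gi := bij_inj gI.1; have g'i := bij_inj g'I.1.
rewrite !val_iotaK //.
by rewrite -imset_comp (eq_imset _ gg') imset_id.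
Qed.

Lemma S3_AI : S3 e h k -> AI e k.
Proof.
move=> s3 chi chiI.
have [g' [g'I gg' g'g]] := iso_inv gI.
have psiI := iso_comp (iotaK_iso dV dW gI) chiI.
have [s [sI sInd]] := s3 _ psiI.
exists (s \o g'); split; first exact: iso_comp g'I sI.
have := Ind_comp (Ind_iotaK dW (bij_inj g'I.1)) sInd sI.1.
apply: Ind_ext => A /=; congr chi; apply: val_inj.
have gi := bij_inj gI.1; have g'i := bij_inj g'I.1.
rewrite !val_iotaK //.
by rewrite -imset_comp (eq_imset _ g'g) imset_id.
Qed.

End Transfer.

Lemma AI_recon (V : finType) (e : rel V) k : AI e k <-> uniquely_reconstructible (tok e k) e k.
Proof.
split.
  move=> ai phi psi phiI psiI.
  have [phi' [phi'I phiphi' phi'phi]] := iso_inv phiI.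
  have [s [sI sInd]] := ai _ (iso_comp phi'I psiI).
  exists s; split => //.
  by case: sInd => H; [left|right] => x; rewrite -[in LHS](phiphi' x) H.
move=> ur psi psiI.
have idI : is_iso (tok e k) (tok e k) id by split => //; exists id.
by have [s [sI H]] := ur id psi idI psiI; exists s.
Qed.


Lemma S3_four (V W : finType) (e : rel V) (h : rel W) k (g : W -> V) :
  S3 e h k ->
  exists f : (ksub W k -> ksub V k) -> (W -> V),
    forall psi : ksub W k -> ksub V k, is_iso (tok h k) (tok e k) psi ->
    forall u : W,
      psi @: kappa u k = kappa (f psi u) k \/
      psi @: kappa u k = kappabar (f psi u) k.
Proof.
move=> s3.
exists (fun psi u => odflt (g u) [pick v | (psi @: kappa u k == kappa v k)
                                       || (psi @: kappa u k == kappabar v k)]).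
move=> psi psiI u.
have [fp [fpI fpInd]] := s3 _ psiI.
have [[psi' pp' p'p] _] := psiI.
have psii : injective psi := can_inj pp'.
have fpi := bij_inj fpI.1.
have P : (psi @: kappa u k == kappa (fp u) k) || (psi @: kappa u k == kappabar (fp u) k).
  case: fpInd => H; apply/orP; [left|right]; apply/eqP/setP => B;
    rewrite -[B](p'p B) mem_imset // !inE H ?inE mem_imset ?negbK //.
case: (pickP (fun v => (psi @: kappa u k == kappa v k) || (psi @: kappa u k == kappabar v k))) => [v /orP [/eqP ->|/eqP ->]|/(_ (fp u))]; [by left|by right|].
by rewrite P.
Qed.


Lemma GAutP (X : finType) (r : rel X) (s : {perm X}) :
  reflect (forall x y, r (s x) (s y) = r x y) (s \in GAut r).
Proof.
rewrite inE; apply: (iffP forallP) => [H x y|H x].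
  by have /forallP /(_ y) /eqP := H x.
by apply/forallP => y; rewrite H.
Qed.

Lemma GAut_group_set (X : finType) (r : rel X) : group_set (GAut r).
Proof.
apply/group_setP; split.
  by apply/GAutP => x y; rewrite !perm1.
move=> s t /GAutP Hs /GAutP Ht; apply/GAutP => x y.
by rewrite !permM Ht Hs.
Qed.

Canonical GAut_group (X : finType) (r : rel X) := Group (GAut_group_set r).

Lemma perm_bij (X : finType) (s : {perm X}) : bijective s.
Proof. exact: (injF_bij (@perm_inj _ s)). Qed.

Lemma perm_is_iso (X : finType) (r : rel X) (s : {perm X}) :
  s \in GAut r -> is_iso r r s.
Proof.
move/GAutP => H; split => //.
exact: perm_bij.
Qed.

Lemma imset_permM (X : finType) (s t : {perm X}) (A : {set X}) :
  (s * t)%g @: A = t @: (s @: A).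
Proof. by rewrite -imset_comp; apply: eq_imset => x; rewrite permM. Qed.


Section Mp.
Variables (V : finType) (k : nat).

Definition halfk := k.*2 == #|V|.

Definition m0 (s : {perm V}) (b : bool) (A : ksub V k) : ksub V k :=
  insubd A (if b && halfk then ~: (s @: val A) else s @: val A).

Lemma val_m0 s b A :
  val (m0 s b A) = if b && halfk then ~: (s @: val A) else s @: val A.
Proof.
have ci : #|s @: val A| = k by rewrite card_imset ?(eqP (valP A)) //; exact: perm_inj.
have Hc : #|(if b && halfk then ~: (s @: val A) else s @: val A)| == k.
  case: ifP => hb; last by rewrite ci.
  case/andP: hb => _ /eqP hh.
  have := cardsC (s @: val A); rewrite ci => H; apply/eqP; lia.
by rewrite val_insubd Hc.
Qed.

Lemma m0_inj s b : injective (m0 s b).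
Proof.
move=> A B /(congr1 val); rewrite !val_m0 => E; apply: val_inj.
apply: (imset_inj (@perm_inj _ s)); case: ifP E => _ //; exact: setC_inj.
Qed.

Definition mp s b : {perm ksub V k} := perm (@m0_inj s b).

Lemma val_mp s b A :
  val (mp s b A) = if b && halfk then ~: (s @: val A) else s @: val A.
Proof. by rewrite permE val_m0. Qed.

Lemma mp_aut (e : rel V) s b : s \in GAut e -> mp s b \in GAut (tok e k).
Proof.
move/GAutP => H; apply/GAutP => A B.
apply: (tok_iso (perm_bij s) H); rewrite !val_mp.
by case: ifP => _; [right|left].
Qed.

Lemma mp_mul s t b c : mp (s * t) (b (+) c) = (mp s b * mp t c)%g.
Proof.
apply/permP => A; apply: val_inj; rewrite permM !val_mp !imset_permM.
case: halfk; rewrite ?andbF ?andbT //.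
case: b; case: c => /=; rewrite ?imsetC_bij ?setCK //; exact: perm_bij.
Qed.

Lemma mp1 : mp 1 false = 1%g.
Proof.
apply/permP => A; apply: val_inj; rewrite val_mp perm1 /=.
by rewrite (eq_imset _ (fun x => perm1 x)) imset_id.
Qed.

Lemma Ind_mp (s : {perm V}) b : Ind s (mp s b).
Proof. by case: (b && halfk) (val_mp s b) => H; [right|left] => A; rewrite H. Qed.

End Mp.


Section MpInj.
Variables (V : finType) (n k : nat).
Hypothesis cV : #|V| = n.
Hypothesis hk : 1 <= k <= n - 1.

Lemma iota_inj (s t : {perm V}) :
  (forall A : ksub V k, s @: val A = t @: val A) -> s = t.
Proof.
move=> H; apply/permP => u; apply/eqP/negP => /negP su.
set u' := (t^-1)%g (s u).
have tu' : t u' = s u by rewrite /u' permKV.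
have uu' : u != u'.
  apply/eqP => E; have : t u = s u by rewrite {1}E tu'.
  by move=> E2; rewrite E2 eqxx in su.
have [A [uA u'A]] := kset_in_out cV hk uu'.
have : s u \in s @: val A by rewrite mem_imset //; exact: perm_inj.
rewrite H -tu' mem_imset; [by rewrite (negbTE u'A) | exact: perm_inj].
Qed.

Lemma iota_cinj (s t : {perm V}) : 2 <= k ->
  (forall A : ksub V k, ~: (s @: val A) = t @: val A) -> False.
Proof.
move=> k2 H.
have [u _] : exists u : V, True.
  by have /card_gt0P[x _] : 0 < #|V| by rewrite cV; lia.
set u' := (t^-1)%g (s u).
have tu' : t u' = s u by rewrite /u' permKV.
have [A [uA u'A]] := kset_both cV hk u u' k2.
have : s u \in s @: val A by rewrite mem_imset //; exact: perm_inj.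
have : t u' \in t @: val A by rewrite mem_imset //; exact: perm_inj.
by rewrite -H tu' inE => /negbTE ->.
Qed.

End MpInj.

Section General.
Variables (V : finType) (e : rel V) (k : nat).
Variables (aT : finGroupType) (D : {group aT}) (m : aT -> {perm ksub V k}) (ind : aT -> {perm V}).
Hypothesis H1 : {in D &, injective m}.
Hypothesis H2 : {in D, forall x, m x \in GAut (tok e k)}.
Hypothesis H3 : {in D, forall x, Ind (ind x) (m x) /\ ind x \in GAut e}.
Hypothesis H4 : {in D &, {morph m : x y / (x * y)%g}}.
Hypothesis H0 : m 1%g = 1%g.
Hypothesis H5 : forall p : {perm ksub V k}, p \in GAut (tok e k) ->
  forall s, is_iso e e s -> Ind s p -> p \in m @: D.

Lemma AI_isog : AI e k <-> GAut (tok e k) \isog D.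
Proof.
have sub : m @: D \subset GAut (tok e k).
  by apply/subsetP => _ /imsetP [x xD ->]; exact: H2.
split.
  move=> ai.
  have EI : m @: D = GAut (tok e k).
    apply/eqP; rewrite eqEsubset sub /=; apply/subsetP => p pA.
    have [s [sI sInd]] := ai _ (perm_is_iso pA).
    by move: (H5 pA) => /(_ s sI); apply.
  rewrite (isog_sym (GAut_group (tok e k)) D).
  apply: (@misom_isog _ _ D _ m); apply/andP; split.
    by apply/morphicP.
  apply/eqP/setP => p; apply/imsetP/setD1P.
    case=> x /setD1P [x1 xD] ->; split; last exact: H2.
    rewrite -H0; apply: contra x1 => /eqP E; apply/eqP; apply: H1 => //.
  case=> p1 pA; have : p \in m @: D by rewrite EI.
  case/imsetP => x xD px; exists x => //.
  by apply/setD1P; split => //; apply: contra p1 => /eqP x1; rewrite px x1 H0.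
move=> iso psi psiI.
have cE := card_isog iso.
have EI : m @: D = GAut (tok e k).
  apply/eqP; rewrite eqEcard sub /= card_in_imset // cE //.
have pA : perm (bij_inj psiI.1) \in GAut (tok e k).
  by apply/GAutP => A B; rewrite !permE psiI.2.
rewrite -EI in pA; case/imsetP: pA => x xD px.
have [xInd xA] := H3 xD.
exists (ind x); split; first exact: perm_is_iso.
by apply: Ind_ext xInd => A; rewrite -px permE.
Qed.

End General.


Lemma zodd (b c : 'Z_2) : odd (b * c)%g = odd b (+) odd c.
Proof. by case: b => [[|[|?]] ?]; case: c => [[|[|?]] ?]. Qed.

Lemma zodd_inj (b c : 'Z_2) : odd b = odd c -> b = c.
Proof. by case: b => [[|[|?]] ?]; case: c => [[|[|?]] ?] //= _; apply: val_inj. Qed.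

Section Inst.
Variables (V : finType) (e : rel V) (n k : nat).
Hypothesis cV : #|V| = n.
Hypothesis n3 : 3 <= n.
Hypothesis hk : 1 <= k <= n - 1.

Lemma perm_of_iso (s : V -> V) (sI : is_iso e e s) :
  exists2 sp : {perm V}, sp \in GAut e & forall x, sp x = s x.
Proof.
exists (perm (bij_inj sI.1)); last by move=> x; rewrite permE.
by apply/GAutP => x y; rewrite !permE sI.2.
Qed.

Lemma AI_isog_nonhalf : k.*2 != n ->
  (AI e k <-> GAut (tok e k) \isog GAut e).
Proof.
move=> nh.
have nh' : halfk V k = false by rewrite /halfk cV; exact: negbTE.
apply: (@AI_isog V e k _ (GAut_group e) (fun s => mp k s false) id).
- move=> s t _ _ E; apply: (iota_inj cV hk) => A.
  by have := congr1 (fun p : {perm ksub V k} => val (p A)) E; rewrite /= !val_mp.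
- by move=> s sA; apply: mp_aut.
- by move=> s sA; split => //; apply: Ind_mp.
- by move=> s t _ _; rewrite -mp_mul.
- exact: mp1.
- move=> p pA s sI [H|H].
    have [sp spA sps] := perm_of_iso sI.
    apply/imsetP; exists sp => //; apply/permP => A; apply: val_inj.
    by rewrite val_mp H /=; apply: eq_imset => x; rewrite sps.
  have [A _] := kset_any cV hk.
  have := valP (p A); rewrite H.
  have := cardsC (s @: val A); rewrite card_imset ?(eqP (valP A)); last exact: bij_inj sI.1.
  move=> C /eqP C2; exfalso; move: nh; rewrite -cV; lia.
Qed.

Lemma AI_isog_half : k.*2 == n ->
  (AI e k <-> GAut (tok e k) \isog setX (GAut e) [set: 'Z_2]).
Proof.
move=> hh.
have hh' : halfk V k = true by rewrite /halfk cV.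
have k2 : 2 <= k by move/eqP: hh; lia.
apply: (@AI_isog V e k _ (setX_group (GAut_group e) [set: 'Z_2]%G)
  (fun x => mp k x.1 (odd x.2)) (fun x => x.1)).
- move=> [s b] [t c] _ _ /= E.
  have E2 A := congr1 (fun p : {perm ksub V k} => val (p A)) E.
  move: E2; rewrite /= => E2.
  have [ob|ob] := eqVneq (odd b) (odd c).
    rewrite (zodd_inj ob); congr (_, _); apply: (iota_inj cV hk) => A.
    move: (E2 A); rewrite !val_mp hh' ob !andbT.
    by case: (odd c) => //; apply: setC_inj.
  exfalso; move: ob (E2).
  case: (odd b); case: (odd c) => //= _ E3.
    by apply: (iota_cinj cV hk k2 (s := s) (t := t)) => A; move: (E3 A); rewrite !val_mp hh'.
  apply: (iota_cinj cV hk k2 (s := t) (t := s)) => A; move: (E3 A); rewrite !val_mp hh' /=.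
  by move->.
- by move=> [s b]; rewrite inE /= => /andP [sA _]; apply: mp_aut.
- by move=> [s b]; rewrite inE /= => /andP [sA _]; split => //; apply: Ind_mp.
- by move=> [s b] [t c] _ _; rewrite /= -mp_mul zodd.
- exact: mp1.
- move=> p pA s sI [H|H]; have [sp spA sps] := perm_of_iso sI; apply/imsetP.
    exists (sp, 1%g); first by rewrite inE /= spA inE.
    apply/permP => A; apply: val_inj.
    by rewrite val_mp H /=; apply: eq_imset => x; rewrite sps.
  exists (sp, (@Ordinal 2 1 isT : 'Z_2)); first by rewrite inE /= spA inE.
  apply/permP => A; apply: val_inj.
  by rewrite val_mp H /= hh'; congr (~: _); apply: eq_imset => x; rewrite sps.
Qed.

End Inst.

Unset Implicit Arguments.
Set Strict Implicit.
Set Printing Implicit Defensive.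

Theorem theorem9 (V W : finType) (e : rel V) (h : rel W) (n k : nat) :
  simple_graph e -> simple_graph h ->
  (exists g : W -> V, is_iso h e g) ->
  #|V| = n -> 3 <= n -> 1 <= k <= n - 1 ->
  [<->
   (* 1 *) uniquely_reconstructible (tok e k) e k;
   (* 2 *) (if k.*2 == n
            then GAut (tok e k) \isog setX (GAut e) [set: 'Z_2]
            else GAut (tok e k) \isog GAut e);
   (* 3 *) (forall psi : ksub W k -> ksub V k, is_iso (tok h k) (tok e k) psi ->
            exists fpsi : W -> V, is_iso h e fpsi /\
              ((forall A, val (psi A) = iota_set fpsi (val A)) \/
               (forall A, val (psi A) = compl_set (iota_set fpsi (val A)))));
   (* 4 *) (exists f : (ksub W k -> ksub V k) -> (W -> V),
            forall psi : ksub W k -> ksub V k, is_iso (tok h k) (tok e k) psi ->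
            forall u : W,
              psi @: kappa u k = kappa (f psi u) k \/
              psi @: kappa u k = kappabar (f psi u) k)].
Proof.
move=> se sh [g gI] cV n3 hk.
have cW : #|W| = n by rewrite -cV; exact: bij_eq_card gI.1.
have [dV _] := kset_any cV hk.
have [dW _] := kset_any cW hk.
have I2 : AI e k <-> (if k.*2 == n
            then GAut (tok e k) \isog setX (GAut e) [set: 'Z_2]
            else GAut (tok e k) \isog GAut e).
  case: ifP => hh; first exact: (AI_isog_half e cV n3 hk hh).
  by apply: (AI_isog_nonhalf e cV n3 hk); rewrite hh.
have R := AI_recon e k.
split; [|split; [|split]].
- by move=> /R.2 /I2.1.
- by move=> /I2.2 /(AI_S3 gI dV dW).
- exact: (S3_four g).
- move=> [f Hf]; apply/R.1; apply: (S3_AI gI dV dW) => psi psiI.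
  exists (f psi); exact: four_three se sh cV cW n3 hk psi (f psi) psiI (Hf psi psiI).
Qed.
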